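(* Let $\kappa\ge 1$, $0\le \ell\le\kappa$, and consider the uncertain plant $$G(s)=\frac{\sum_{i=0}^{\ell}\beta_i s^{\ell-i}}{\sum_{i=0}^{\kappa}\alpha_i s^{\kappa-i}},\qquad \alpha_0=1,$$ with real uncertain parameter vector $\theta=(\alpha_1,\dots,\alpha_\kappa,\beta_0,\dots,\beta_\ell)\in\mathbb{R}^{\kappa+\ell+1}$. Let $\mathcal{B}\subset\mathbb{R}^{\kappa+\ell+1}$ be a nonempty bounded set (the assumed uncertainty range), and suppose there is a real controller $$C(s)=\frac{\sum_{i=0}^{m} b_i s^{m-i}}{\sum_{i=0}^{n} a_i s^{n-i}},\qquad a_0=1,\quad b_0\neq 0,\quad m\le n,$$ which robustly stabilizes the unity-feedback closed loop for every $\theta\in\mathcal{B}$, i.e. for every $\theta\in\mathcal{B}$ the closed-loop characteristic polynomial $$\chi_\theta(s)=\Big(\sum_{i=0}^{n}a_i s^{n-i}\Big)\Big(\sum_{j=0}^{\kappa}\alpha_j s^{\kappa-j}\Big)+\Big(\sum_{i=0}^{m}b_i s^{m-i}\Big)\Big(\sum_{j=0}^{\ell}\beta_j s^{\ell-j}\Big)$$ has all its roots in the open left half-plane. Then there exists a parameter vector $\theta'\notin\mathcal{B}$, obtained from some element of $\mathcal{B}$ by changing a single coordinate $\alpha_i$ or $\beta_j$, for which $\chi_{\theta'}$ has a root with nonnegative real part (i.e. the closed-loop system with the same controller is unstable).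
   Context: Unity negative feedback: the closed-loop system is $C G/(1+CG)$; ''stable'' means the characteristic polynomial $\chi_\theta$ (which is monic of degree $n+\kappa$) is Hurwitz, i.e. all roots have strictly negative real part. *)

(* Defs.v *)
(* Complex numbers: an arbitrary numClosedFieldType C
   (e.g. algebraic complex numbers, or any model of C); reals = Num.real part. *)
From HB Require Import structures.
From mathcomp Require Import all_boot all_order all_algebra.
Set Implicit Arguments. Unset Strict Implicit. Unset Printing Implicit Defensive.
Import Order.TTheory GRing.Theory Num.Theory.
Local Open Scope ring_scope.

Definition poly_desc (C : numClosedFieldType) (d : nat) (c : nat -> C) : {poly C} :=
  \sum_(i < d.+1) c i *: 'X^(d - i).

(* theta = (alpha_1..alpha_kappa, beta_0..beta_ell), indexed by 'I_(kappa + ell.+1) *)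
Definition alpha_of (C : numClosedFieldType) (kappa ell : nat)
  (theta : 'I_(kappa + ell.+1) -> C) (i : nat) : C :=
  if i is i'.+1 then
    (match (insub i' : option 'I_kappa) with Some j => theta (lshift ell.+1 j) | None => 0 end)
  else 1.

Definition beta_of (C : numClosedFieldType) (kappa ell : nat)
  (theta : 'I_(kappa + ell.+1) -> C) (j : nat) : C :=
  match (insub j : option 'I_ell.+1) with Some k => theta (rshift kappa k) | None => 0 end.

Definition plant_den (C : numClosedFieldType) kappa ell theta : {poly C} :=
  poly_desc kappa (@alpha_of C kappa ell theta).
Definition plant_num (C : numClosedFieldType) kappa ell theta : {poly C} :=
  poly_desc ell (@beta_of C kappa ell theta).

Definition chi (C : numClosedFieldType) (kappa ell n m : nat) (a b : nat -> C)
  (theta : 'I_(kappa + ell.+1) -> C) : {poly C} :=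
  poly_desc n a * plant_den theta + poly_desc m b * plant_num theta.

Definition hurwitz (C : numClosedFieldType) (p : {poly C}) : Prop :=
  forall z, root p z -> 'Re z < 0.

(* Main.v *)
Require Import Defs.
From HB Require Import structures.
From mathcomp Require Import all_boot all_order all_algebra.
Import Order.TTheory GRing.Theory Num.Theory.
Local Open Scope ring_scope.
Set Implicit Arguments. Unset Strict Implicit.
Lemma pd0 (C : numClosedFieldType) d (c : nat -> C) : (poly_desc d c).[0] = c d.
Proof.
rewrite /poly_desc horner_sum big_ord_recr /= big1 ?add0r.
  by rewrite hornerZ hornerXn subnn expr0 mulr1.
move=> i _; rewrite hornerZ hornerXn expr0n.
have -> : (d - i == 0)%N = false by rewrite subn_eq0 leqNgt ltn_ord.
by rewrite mulr0.
Qed.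

Lemma alpha_last (C : numClosedFieldType) k ell (t : 'I_(k.+1 + ell.+1) -> C) :
  alpha_of t k.+1 = t (lshift ell.+1 (@ord_max k)).
Proof.
rewrite /alpha_of; case: insubP => [u _ Hu|]; last by rewrite ltnSn.
by congr (t _); apply: val_inj; rewrite /= Hu.
Qed.

Lemma beta_last (C : numClosedFieldType) k ell (t : 'I_(k + ell.+1) -> C) :
  beta_of t ell = t (rshift k (@ord_max ell)).
Proof.
rewrite /beta_of; case: insubP => [u _ Hu|]; last by rewrite ltnSn.
by congr (t _); apply: val_inj; rewrite /= Hu.
Qed.
Lemma chi0 (C : numClosedFieldType) kappa ell n m (a b : nat -> C) t :
  (chi n m a b t).[0] = a n * alpha_of t kappa + b m * @beta_of C kappa ell t ell.
Proof. by rewrite /chi /plant_den /plant_num hornerD !hornerM !pd0. Qed.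

Lemma finish (C : numClosedFieldType) (kappa ell n m : nat) (a b : nat -> C)
  (B : ('I_(kappa + ell.+1) -> C) -> Prop) th0 i0 v :
  B th0 -> (forall i, th0 i \is Num.real) -> v \is Num.real ->
  (forall theta, B theta -> hurwitz (chi n m a b theta)) ->
  (chi n m a b (fun j => if j == i0 then v else th0 j)).[0] = 0 ->
  exists theta' : 'I_(kappa + ell.+1) -> C,
    (forall i, theta' i \is Num.real) /\ ~ B theta' /\
    (exists theta0, B theta0 /\ exists i, forall j, j != i -> theta' j = theta0 j) /\
    exists z, root (chi n m a b theta') z /\ 0 <= 'Re z.
Proof.
move=> B0 r0 rv H h0.
have Re00 : 'Re (0:C) = 0 by apply/Creal_ReP; exact: real0.
exists (fun j => if j == i0 then v else th0 j); split.
  by move=> i; case: ifP.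
split.
  move=> /H /(_ 0) Hz; have := Hz (introT eqP h0); by rewrite Re00 ltxx.
split.
  exists th0; split => //; exists i0 => j /negbTE ->; done.
by exists 0; split; [apply/eqP | rewrite Re00].
Qed.

Theorem theorem1 (C : numClosedFieldType) (kappa ell n m : nat) (a b : nat -> C)
  (B : ('I_(kappa + ell.+1) -> C) -> Prop) :
  (0 < kappa)%N -> (ell <= kappa)%N ->
  (forall theta, B theta -> forall i, theta i \is Num.real) ->
  (exists theta, B theta) ->
  (exists M : C, forall theta, B theta -> forall i, `|theta i| <= M) ->
  a 0%N = 1 -> b 0%N != 0 -> (m <= n)%N ->
  (forall i, a i \is Num.real) -> (forall i, b i \is Num.real) ->
  (forall theta, B theta -> hurwitz (chi n m a b theta)) ->
  exists theta' : 'I_(kappa + ell.+1) -> C,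
    (forall i, theta' i \is Num.real) /\ ~ B theta' /\
    (exists theta0, B theta0 /\ exists i, forall j, j != i -> theta' j = theta0 j) /\
    exists z, root (chi n m a b theta') z /\ 0 <= 'Re z.
Proof.
case: kappa B => [|k] B // _ _ Hr [th0 B0] _ _ _ _ ra rb H.
have r0 := Hr _ B0.
set ia : 'I_(k.+1 + ell.+1) := lshift ell.+1 (@ord_max k).
set ib : 'I_(k.+1 + ell.+1) := rshift k.+1 (@ord_max ell).
have nab : (ib == ia) = false.
  apply/negbTE/eqP => /(congr1 val) /=.
  by move=> E; have := leq_addr ell k.+1; rewrite E ltnn.
case: (eqVneq (a n) 0) => an.
  apply: (@finish _ _ _ _ _ _ _ _ th0 ib 0) => //.
  by rewrite chi0 alpha_last beta_last an eqxx mul0r add0r mulr0.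
apply: (@finish _ _ _ _ _ _ _ _ th0 ia (- (b m * th0 ib) / a n)) => //.
  by rewrite rpredM ?rpredN ?rpredM ?rpredV.
rewrite (@chi0 C k.+1 ell n m a b) alpha_last beta_last eqxx nab.
by rewrite mulrC -mulrA mulVf // mulr1 addrC subrr.
Qed.
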